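(* For every integer $n\ge 1$, $$\Phi^{(1)}[a; bq^n, b'; c; x, y] = \Phi^{(1)}[a; b, b'; c; x, y] + \frac{bx(1-a)}{1-c} \sum_{k=1}^n q^{k-1} \Phi^{(1)}[aq; bq^k, b'; cq; x, y]$$ and $$\Phi^{(1)}[a; bq^{-n}, b'; c; x, y] = \Phi^{(1)}[a; b, b'; c; x, y] - \frac{bx(1-a)}{1-c} \sum_{k=1}^n q^{-k} \Phi^{(1)}[aq; bq^{1-k}, b'; cq; x, y].$$
   Context: Let $q$ be a complex number with $0<|q|<1$. For complex $z$ and integer $m\ge 0$, $(z;q)_m=\prod_{j=0}^{m-1}(1-zq^j)$, with $(z;q)_0=1$. The $q$-Appell function $\Phi^{(1)}$ is $$\Phi^{(1)}[a; b, b'; c; x, y] = \sum_{m, n \geq 0} \frac{(a; q)_{m+n} (b; q)_m (b'; q)_n}{(q; q)_m (q; q)_n (c; q)_{m+n}} x^m y^n.$$ Identities are understood as identities of power series in $x,y$ (formal, or convergent for small $|x|,|y|$), with complex parameters chosen so that no denominator occurring vanishes. *)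

(* Defs.v *)
From HB Require Import structures.
From mathcomp Require Import all_boot all_order all_algebra.
From mathcomp Require Export complex.
Set Implicit Arguments. Unset Strict Implicit. Unset Printing Implicit Defensive.
Import Order.TTheory GRing.Theory Num.Theory.
Local Open Scope ring_scope.
Local Open Scope complex_scope.

Definition qpoch (R : rcfType) (z q : R[i]) (m : nat) : R[i] :=
  \prod_(j < m) (1 - z * q ^+ j).

(* Formal power series in two variables x, y over R[i]:
   s m n is the coefficient of x^m y^n. *)
Definition fps2 (R : rcfType) := nat -> nat -> R[i].

Definition fps2_add (R : rcfType) (s t : fps2 R) : fps2 R :=
  fun m n => s m n + t m n.
Definition fps2_scale (R : rcfType) (a : R[i]) (s : fps2 R) : fps2 R :=
  fun m n => a * s m n.
Definition fps2_mulx (R : rcfType) (s : fps2 R) : fps2 R :=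
  fun m n => if m is m'.+1 then s m' n else 0.
Definition fps2_sum (R : rcfType) (lo hi : nat) (F : nat -> fps2 R) : fps2 R :=
  fun m n => \sum_(lo <= k < hi) F k m n.

Definition Phi1 (R : rcfType) (q a b b' c : R[i]) : fps2 R :=
  fun m n => qpoch a q (m + n) * qpoch b q m * qpoch b' q n
             / (qpoch q q m * qpoch q q n * qpoch c q (m + n)).

(* Main.v *)
Require Import Defs.
From mathcomp Require Import all_boot all_order all_algebra complex.
From mathcomp Require Import ring.
From Stdlib Require Import FunctionalExtensionality.
Import Order.TTheory GRing.Theory Num.Theory.
Local Open Scope ring_scope.
Local Open Scope complex_scope.

Section S.
Variable R : rcfType.
Implicit Types q a b c z : R[i].

Lemma qpochSl z q k : qpoch z q k.+1 = (1 - z) * qpoch (z * q) q k.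
Proof.
rewrite /qpoch big_ord_recl /= expr0 mulr1; congr (_ * _).
by apply: eq_bigr => j _; rewrite /bump /= add1n exprS mulrA.
Qed.

Lemma qpochSr z q k : qpoch z q k.+1 = qpoch z q k * (1 - z * q ^+ k).
Proof. by rewrite /qpoch big_ord_recr. Qed.

Lemma qpow_neq1 q k : 0 < `|q| -> `|q| < 1 -> q ^+ k.+1 != 1.
Proof.
move=> h0 h1; apply/eqP => e.
have : `|q ^+ k.+1| = 1 by rewrite e normr1.
rewrite normrX => e2.
have := exprn_ilt1 k.+1 (ltW h0) h1.
by rewrite e2 ltxx.
Qed.

Lemma qq_neq0 q k : 0 < `|q| -> `|q| < 1 -> qpoch q q k != 0.
Proof.
move=> h0 h1; rewrite /qpoch prodf_seq_neq0; apply/allP => j _ /=.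
by rewrite -exprS subr_eq0 eq_sym qpow_neq1.
Qed.

Lemma cq_neq0 q c k : (forall j : nat, 1 - c * q ^+ j != 0) -> qpoch (c * q) q k != 0.
Proof.
move=> hc; rewrite /qpoch prodf_seq_neq0; apply/allP => j _ /=.
by rewrite -mulrA -exprS hc.
Qed.

Lemma c_neq0 q c k : (forall j : nat, 1 - c * q ^+ j != 0) -> qpoch c q k != 0.
Proof.
move=> hc; rewrite /qpoch prodf_seq_neq0; apply/allP => j _ /=.
by rewrite hc.
Qed.

Lemma step q a b b' c m k : 0 < `|q| -> `|q| < 1 ->
  (forall j : nat, 1 - c * q ^+ j != 0) ->
  Phi1 q a (b * q) b' c m k = Phi1 q a b b' c m k +
   b * (1 - a) / (1 - c) *
   (if m is m'.+1 then Phi1 q (a * q) (b * q) b' (c * q) m' k else 0).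
Proof.
move=> h0 h1 hc; case: m => [|m].
  by rewrite /Phi1 /qpoch !big_ord0 mulr0 addr0.
rewrite /Phi1 addSn (qpochSr (b * q)) (qpochSr q q m) !qpochSl.
have hc0 : 1 - c != 0 by have := hc 0%N; rewrite expr0 mulr1.
have hq1 : 1 - q * q ^+ m != 0 by rewrite -exprS subr_eq0 eq_sym qpow_neq1.
have := @qq_neq0 q m h0 h1; have := @qq_neq0 q k h0 h1; have := @cq_neq0 q c (m + k) hc.
move=> H1 H2 H3.
field.
by rewrite hc0 H1 H2 H3 hq1.
Qed.

Lemma iter1 q a b b' c m k n : 0 < `|q| -> `|q| < 1 ->
  (forall j : nat, 1 - c * q ^+ j != 0) ->
  Phi1 q a (b * q ^+ n) b' c m k = Phi1 q a b b' c m k +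
   b * (1 - a) / (1 - c) *
   (if m is m'.+1 then \sum_(1 <= i < n.+1) q ^ (i%:Z - 1) *
       Phi1 q (a * q) (b * q ^+ i) b' (c * q) m' k else 0).
Proof.
move=> h0 h1 hc; elim: n => [|n IH].
  by case: m => [|m]; rewrite ?big_geq // expr0 mulr1 mulr0 addr0.
rewrite exprSr mulrA step // IH; case: m IH => [|m] IH; first by rewrite !mulr0 !addr0.
have e : b * q ^+ n * q = b * q ^+ n.+1 by rewrite exprSr mulrA.
rewrite e [in X in _ = X]big_nat_recr // /=.
have -> : (n.+1%:Z - 1 = n%:Z)%R by rewrite -addn1 PoszD addrK.
rewrite -exprnP; ring.
Qed.

Lemma iter2 q a b b' c m k n : 0 < `|q| -> `|q| < 1 ->
  (forall j : nat, 1 - c * q ^+ j != 0) ->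
  Phi1 q a b b' c m k = Phi1 q a (b * q ^- n) b' c m k +
   b * (1 - a) / (1 - c) *
   (if m is m'.+1 then \sum_(1 <= i < n.+1) q ^- i *
       Phi1 q (a * q) (b * q ^ (1 - i%:Z)) b' (c * q) m' k else 0).
Proof.
move=> h0 h1 hc.
have q0 : q != 0 by rewrite -normr_gt0.
elim: n => [|n IH].
  by case: m => [|m]; rewrite ?big_geq // expr0 invr1 mulr1 mulr0 addr0.
have e1 : b * q ^- n = (b * q ^- n.+1) * q.
  by rewrite exprSr invfM -!mulrA mulVf // mulr1.
have e2 : b * q ^- n.+1 * q = b * q ^ (1 - n.+1%:Z).
  rewrite -mulrA; congr (_ * _).
  by rewrite expfzDr // expr1z exprnN mulrC.
rewrite IH e1 step // e2; case: m IH => [|m] IH; first by rewrite !mulr0 !addr0.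
rewrite [in X in _ = X]big_nat_recr // /=; ring.
Qed.
End S.

Theorem theorem3 (R : rcfType) (q a b b' c : R[i]) (n : nat) :
  0 < `|q| -> `|q| < 1 ->
  (forall j : nat, 1 - c * q ^+ j != 0) ->
  (0 < n)%N ->
  Phi1 q a (b * q ^+ n) b' c =
    fps2_add (Phi1 q a b b' c)
      (fps2_scale (b * (1 - a) / (1 - c))
        (fps2_mulx (fps2_sum 1 n.+1
          (fun k => fps2_scale (q ^ (k%:Z - 1)) (Phi1 q (a * q) (b * q ^+ k) b' (c * q))))))
  /\
  Phi1 q a (b * q ^- n) b' c =
    fps2_add (Phi1 q a b b' c)
      (fps2_scale (- (b * (1 - a) / (1 - c)))
        (fps2_mulx (fps2_sum 1 n.+1
          (fun k => fps2_scale (q ^- k) (Phi1 q (a * q) (b * q ^ (1 - k%:Z)) b' (c * q)))))).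
Proof.
move=> h0 h1 hc _; split.
  apply: functional_extensionality; intro m; apply: functional_extensionality; intro k.
  rewrite /fps2_add /fps2_scale /fps2_mulx /fps2_sum (@iter1 R q a b b' c m k n h0 h1 hc).
  by case: m.
apply: functional_extensionality; intro m; apply: functional_extensionality; intro k.
rewrite /fps2_add /fps2_scale /fps2_mulx /fps2_sum (@iter2 R q a b b' c m k n h0 h1 hc).
rewrite mulNr -addrA.
by case: m => [|m] /=; rewrite subrr addr0.
Qed.
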